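(* Let $q$ be a power of $2$, $n\ge 4$, and let $M$ be an $n\times n$ matrix with entries in $\mathbb{F}_q$. Then $0\in\mathrm{Num}'_0(M)_q$.
   Context: For $M=(m_{ij})$ with entries in $\mathbb{F}_q$ and $u=(x_1,\dots,x_n)\in\mathbb{F}_q^n$, with the Hermitian form $\langle u,v\rangle=\sum_i u_i^qv_i$ one has $\langle u,u\rangle=\sum_i x_i^2$ and $\langle u,Mu\rangle=\sum_{i,j}m_{ij}x_ix_j$. $\mathrm{Num}'_0(M)_q=\{\langle u,Mu\rangle: u\in\mathbb{F}_q^n\setminus\{0\},\ \langle u,u\rangle=0\}$. *)

(* Defs.v *)
From mathcomp Require Import all_boot all_order all_algebra.
Set Implicit Arguments. Unset Strict Implicit. Unset Printing Implicit Defensive.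
Import GRing.Theory.
Local Open Scope ring_scope.

(* Hermitian form <u,v> = sum_i u_i^q v_i, where q = #|F|.  For vectors with
   entries in F = F_q this is the form of the paper restricted to F_q^n. *)
Definition herm (F : finFieldType) (n : nat) (u v : 'cV[F]_n) : F :=
  \sum_(i < n) (u i 0) ^+ #|F| * v i 0.

Definition NumPrime0 (F : finFieldType) (n : nat) (M : 'M[F]_n) : {set F} :=
  [set z | [exists u : 'cV[F]_n,
     [&& u != 0, herm u u == 0 & herm u (M *m u) == z]]].

(* Main.v *)
Require Import Defs.
From mathcomp Require Import all_boot all_order all_algebra all_field.
From mathcomp Require Import ring.
Set Implicit Arguments. Unset Strict Implicit. Unset Printing Implicit Defensive.
Import GRing.Theory.
Local Open Scope ring_scope.

Lemma ring_aux (F : finFieldType) (x y z m0 m1 m2 m3 m4 m5 m6 m7 m8 : F) :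
  x * (x * m0 + y * m3 + z * m6) +
  y * (x * m1 + y * m4 + z * m7) +
  z * (x * m2 + y * m5 + z * m8) =
  x ^+ 2 * m0 + y ^+ 2 * m4 + z ^+ 2 * m8 + x * y * (m1 + m3) +
  x * z * (m2 + m6) + y * z * (m5 + m7).
Proof. ring. Qed.

Section Aux.
Variables (F : finFieldType) (n : nat).

Definition Qf (N : 'M[F]_n) (v : 'cV[F]_n) : F := (v^T *m (N *m v)) 0 0.
Definition Bf (N : 'M[F]_n) (a b : 'cV[F]_n) : F :=
  (a^T *m (N *m b)) 0 0 + (b^T *m (N *m a)) 0 0.

Lemma herm_Qf (u v : 'cV[F]_n) : herm u v = (u^T *m v) 0 0.
Proof.
rewrite /herm !mxE; apply: eq_bigr => i _; by rewrite expf_card !mxE.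
Qed.

Lemma Qf_expand N (a b c : 'cV[F]_n) x y z :
  Qf N (x *: a + y *: b + z *: c) =
  x^+2 * Qf N a + y^+2 * Qf N b + z^+2 * Qf N c
  + x * y * Bf N a b + x * z * Bf N a c + y * z * Bf N b c.
Proof.
rewrite /Qf /Bf !mulmxDr -!scalemxAr !linearD /= !linearZ /= !mulmxDl -!scalemxAl.
rewrite ?mulmxDr -?scalemxAr.
move: (a^T *m (N *m a)) (a^T *m (N *m b)) (a^T *m (N *m c))
      (b^T *m (N *m a)) (b^T *m (N *m b)) (b^T *m (N *m c))
      (c^T *m (N *m a)) (c^T *m (N *m b)) (c^T *m (N *m c)) => m0 m1 m2 m3 m4 m5 m6 m7 m8.
rewrite !mxE.
move: (m0 0 0) (m1 0 0) (m2 0 0) (m3 0 0) (m4 0 0) (m5 0 0) (m6 0 0) (m7 0 0) (m8 0 0) => *; apply: ring_aux.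
Qed.

Lemma Bf1 (two0 : 2%:R = 0 :> F) (a b : 'cV[F]_n) : Bf 1 a b = 0.
Proof.
rewrite /Bf !mul1mx.
have -> : b^T *m a = (a^T *m b)^T by rewrite trmx_mul trmxK.
by rewrite [X in _ + X]mxE -mulr2n -mulr_natr two0 mulr0.
Qed.

End Aux.

Lemma ternary (F : finFieldType) (two0 : 2%:R = 0 :> F)
  (sq : forall w : F, exists r, r ^+ 2 = w) (a b c d e f : F) :
  exists x y z : F, [|| x != 0, y != 0 | z != 0] /\
   x^+2 * a + y^+2 * b + z^+2 * c + x * y * d + x * z * e + y * z * f = 0.
Proof.
have two0' : forall t : F, t + t = 0.
  by move=> t; rewrite -mulr2n -mulr_natr two0 mulr0.
case: (eqVneq c 0) => [->|cn0].
  exists 0, 0, 1; split; first by rewrite oner_neq0 !orbT.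
  by rewrite !(mul0r, mulr0, expr0n, add0r, addr0).
have [x [y [xy0 exy]]] : exists x y : F, (x != 0) || (y != 0) /\ e * x + f * y = 0.
  case: (eqVneq e 0) => [->|en0].
    case: (eqVneq f 0) => [->|fn0].
      by exists 1, 0; rewrite oner_eq0 /= !mul0r addr0.
    exists f, 0; rewrite fn0; split => //; by rewrite mul0r mulr0 addr0.
  exists f, e; rewrite en0 orbT; split => //; by rewrite mulrC two0'.
have [z hz] := sq ((x^+2 * a + y^+2 * b + x * y * d) / c).
exists x, y, z; split; first by case/orP: xy0 => ->; rewrite ?orbT.
have -> : z^+2 * c = x^+2 * a + y^+2 * b + x * y * d.
  by rewrite hz -mulrA mulVf // mulr1.
have -> : x^+2 * a + y^+2 * b + (x^+2 * a + y^+2 * b + x * y * d) + x * y * d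
   + x * z * e + y * z * f
   = ((x^+2 * a + y^+2 * b + x * y * d) + (x^+2 * a + y^+2 * b + x * y * d))
     + z * (e * x + f * y) by ring.
by rewrite exy mulr0 addr0 two0'.
Qed.

Theorem corollary2 (F : finFieldType) (k : nat) (hq : #|F| = (2 ^ k)%N)
  (n : nat) (hn : (4 <= n)%N) (M : 'M[F]_n) :
  0 \in NumPrime0 M.
Proof.
have two0 : 2%:R = 0 :> F by apply: pcharf0; exact: card_finPcharP hq _.
have two0' : forall t : F, t + t = 0.
  by move=> t; rewrite -mulr2n -mulr_natr two0 mulr0.
have kpos : (0 < k)%N.
  case: k hq => // hq; have := finNzRing_gt1 F; by rewrite hq.
have sq : forall w : F, exists r, r ^+ 2 = w.
  move=> w; exists (w ^+ (2 ^ k.-1)); rewrite -exprM -expnSr prednK //.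
  by rewrite -hq expf_card.
have h0 : (0 < n)%N by apply: leq_trans hn.
have h1 : (1 < n)%N by apply: leq_trans hn.
have h2 : (2 < n)%N by apply: leq_trans hn.
have h3 : (3 < n)%N by [].
pose d (i : 'I_n) : 'cV[F]_n := delta_mx i 0.
pose i0 := Ordinal h0; pose i1 := Ordinal h1; pose i2 := Ordinal h2; pose i3 := Ordinal h3.
pose w1 := d i0 + d i3; pose w2 := d i1 + d i3; pose w3 := d i2 + d i3.
have [x [y [z [nz hQ]]]] := ternary two0 sq (Qf M w1) (Qf M w2) (Qf M w3)
   (Bf M w1 w2) (Bf M w1 w3) (Bf M w2 w3).
have Q1w : forall i : 'I_n, i != i3 -> Qf 1 (d i + d i3) = 0.
  move=> i ni; rewrite /Qf /d mul1mx [(_ + _)^T]linearD /= !trmx_delta !mulmxDl !mulmxDr.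
  rewrite !mul_delta_mx !mul_delta_mx_0 // 1?eq_sym // addr0 add0r mxE.
  by rewrite two0'.
rewrite inE; apply/existsP; exists (x *: w1 + y *: w2 + z *: w3).
apply/and3P; split.
- apply/eqP => u0.
  have e0 := congr1 (fun A : 'cV[F]_n => A i0 0) u0.
  have e1 := congr1 (fun A : 'cV[F]_n => A i1 0) u0.
  have e2 := congr1 (fun A : 'cV[F]_n => A i2 0) u0.
  move: e0 e1 e2; rewrite /w1 /w2 /w3 /d !mxE /=.
  rewrite !(addr0, mulr0, mulr1, add0r) => ex ey ez.
  by move: nz; rewrite ex ey ez eqxx.
- apply/eqP; have -> : forall u : 'cV[F]_n, herm u u = Qf 1 u by move=> u; rewrite herm_Qf /Qf mul1mx.
  rewrite Qf_expand !Bf1 // !Q1w //.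
  by rewrite !mulr0 !addr0.
- apply/eqP; have -> : forall u : 'cV[F]_n, herm u (M *m u) = Qf M u by move=> u; rewrite herm_Qf.
  by rewrite Qf_expand.
Qed.
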